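(* Assume $s\ge n-r+1$ and let $1\le j_1<\dots<j_{n-r+1}\le s$. Put $$A(j_1,\dots,j_{n-r+1})=\sum_{\sigma\in\mathfrak S_{n+1}}\mathrm{sign}(\sigma)\frac{\partial F_1}{\partial X_{\sigma(0)}}\cdots\frac{\partial F_r}{\partial X_{\sigma(r-1)}}\cdot\frac{\partial G_{j_1}}{\partial X_{\sigma(r)}}\cdots\frac{\partial G_{j_{n-r+1}}}{\partial X_{\sigma(n)}},$$ where $\mathfrak S_{n+1}$ is the group of permutations of $\{0,\dots,n\}$, and $$A'=A(j_1,\dots,j_{n-r+1})\cdot\frac{G_1\cdots G_s}{G_{j_1}\cdots G_{j_{n-r+1}}}\in P^{\mathbf d+\mathbf e-n-1}.$$ Then $A'\mu_i\in J$ and $A'\lambda_j\in J$ for all $1\le i\le r$ and $1\le j\le s$.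
   Context: Let $k$ be a field of characteristic zero, integers $r,s\ge0$ with $r+s\ge1$, $n\ge2$, $d_i,e_j\ge1$, $\mathbf d=\sum_id_i$, $\mathbf e=\sum_je_j$. $P=k[X_0,\dots,X_n]$ with degree-$l$ part $P^l$, and $A=P[\mu_1,\dots,\mu_r,\lambda_1,\dots,\lambda_s]$. Fix $F_i\in P^{d_i}$ ($1\le i\le r$), $G_j\in P^{e_j}$ ($1\le j\le s$) such that the hypersurfaces $\{F_i=0\}$, $\{G_j=0\}$ of $\mathbb P^n$ are smooth and intersect transversally. $J\subset A$ is the ideal generated by $\sum_i\frac{\partial F_i}{\partial X_k}\mu_i+\sum_j\frac{\partial G_j}{\partial X_k}\lambda_j$ ($0\le k\le n$), $F_i$ ($1\le i\le r$), and $G_j\lambda_j$ ($1\le j\le s$). *)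

(* Defs.v *)
From HB Require Import structures.
From mathcomp Require Import all_boot all_order all_algebra all_fingroup all_field.
From mathcomp Require Import mpoly.
Set Implicit Arguments. Unset Strict Implicit. Unset Printing Implicit Defensive.
Import GRing.Theory.
Local Open Scope ring_scope.

(* P = k[X_0,...,X_n] is {mpoly k[n.+1]}; A = P[mu_1..mu_r, lambda_1..lambda_s]
   is {mpoly {mpoly k[n.+1]}[r + s]}, with mu_i = 'X_(lshift s i) and
   lambda_j = 'X_(rshift r j); P embeds into A via constants (%:MP). *)

Definition homogOf (k : fieldType) (N : nat) (d : nat) (p : {mpoly k[N]}) : bool :=
  p \is ishomog1 d mdeg.

Definition evalExt (k : fieldType) (L : fieldExtType k) (N : nat)
  (p : {mpoly k[N]}) (x : 'I_N -> L) : L :=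
  (map_mpoly (in_alg L) p).@[x].

(* The hypersurfaces {F_i = 0}, {G_j = 0} of P^n are smooth and intersect
   transversally: at every geometric point x (coordinates in some finite
   extension L of k, x <> 0), the gradients at x of those F_i, G_j vanishing
   at x are linearly independent over L. *)
Definition smooth_transversal (k : fieldType) (n r s : nat)
  (F : 'I_r -> {mpoly k[n.+1]}) (G : 'I_s -> {mpoly k[n.+1]}) : Prop :=
  forall (L : fieldExtType k) (x : 'I_n.+1 -> L), (exists t, x t != 0) ->
  forall (a : 'I_r -> L) (b : 'I_s -> L),
    (forall i, evalExt (F i) x != 0 -> a i = 0) ->
    (forall j, evalExt (G j) x != 0 -> b j = 0) ->
    (forall t : 'I_n.+1,
       \sum_(i < r) a i * evalExt (mderiv t (F i)) x
     + \sum_(j < s) b j * evalExt (mderiv t (G j)) x = 0) ->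
    (forall i, a i = 0) /\ (forall j, b j = 0).

Definition mu_ (k : fieldType) (n r s : nat) (i : 'I_r)
  : {mpoly {mpoly k[n.+1]}[r + s]} := 'X_(lshift s i).
Definition lambda_ (k : fieldType) (n r s : nat) (j : 'I_s)
  : {mpoly {mpoly k[n.+1]}[r + s]} := 'X_(rshift r j).

Definition inJ (k : fieldType) (n r s : nat)
  (F : 'I_r -> {mpoly k[n.+1]}) (G : 'I_s -> {mpoly k[n.+1]})
  (z : {mpoly {mpoly k[n.+1]}[r + s]}) : Prop :=
  exists (a : 'I_n.+1 -> {mpoly {mpoly k[n.+1]}[r + s]})
         (b : 'I_r -> {mpoly {mpoly k[n.+1]}[r + s]})
         (c : 'I_s -> {mpoly {mpoly k[n.+1]}[r + s]}),
    z = \sum_(t < n.+1) a t *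
          (\sum_(i < r) (mderiv t (F i))%:MP * mu_ k n s i
         + \sum_(j < s) (mderiv t (G j))%:MP * lambda_ k n r j)
      + \sum_(i < r) b i * (F i)%:MP
      + \sum_(j < s) c j * ((G j)%:MP * lambda_ k n r j).

Definition jacFactor (k : fieldType) (n r s m : nat)
  (F : 'I_r -> {mpoly k[n.+1]}) (G : 'I_s -> {mpoly k[n.+1]})
  (jj : 'I_m -> 'I_s) (t : 'I_(r + m)) (l : 'I_n.+1) : {mpoly k[n.+1]} :=
  match split t with
  | inl i => mderiv l (F i)
  | inr u => mderiv l (G (jj u))
  end.

Definition Ajac (k : fieldType) (n r s m : nat) (hm : (r + m = n.+1)%N)
  (F : 'I_r -> {mpoly k[n.+1]}) (G : 'I_s -> {mpoly k[n.+1]})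
  (jj : 'I_m -> 'I_s) : {mpoly k[n.+1]} :=
  \sum_(sigma : 'S_n.+1) (-1) ^+ (odd_perm sigma) *
    \prod_(t : 'I_(r + m)) jacFactor F G jj t (sigma (cast_ord hm t)).

(* A' = A * (G_1 ... G_s) / (G_{j_1} ... G_{j_m}) = A * prod_{j not among the j_l} G_j *)
Definition Aprime (k : fieldType) (n r s m : nat) (hm : (r + m = n.+1)%N)
  (F : 'I_r -> {mpoly k[n.+1]}) (G : 'I_s -> {mpoly k[n.+1]})
  (jj : 'I_m -> 'I_s) : {mpoly k[n.+1]} :=
  Ajac hm F G jj * \prod_(j < s | j \notin codom jj) G j.

(* Main.v *)
Require Import Defs.
From HB Require Import structures.
From mathcomp Require Import all_boot all_order all_algebra all_fingroup all_field.
From mathcomp Require Import mpoly.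
From mathcomp Require Import ring.
Set Implicit Arguments. Unset Strict Implicit. Unset Printing Implicit Defensive.
Import GRing.Theory.
Local Open Scope ring_scope.

Section Key.
Variables (k : fieldType) (n r s m : nat) (hm : (r + m = n.+1)%N).
Variables (F : 'I_r -> {mpoly k[n.+1]}) (G : 'I_s -> {mpoly k[n.+1]}).
Variables (jj : 'I_m -> 'I_s) (jj_inj : injective jj).

Local Notation R := {mpoly k[n.+1]}.
Local Notation AA := {mpoly R[r + s]}.

Definition Mx : 'M[R]_n.+1 :=
  \matrix_(p, l) jacFactor F G jj (cast_ord (esym hm) p) l.

Lemma det_Mx : \det Mx = Ajac hm F G jj.
Proof.
rewrite /Ajac; apply: eq_bigr => sigma _; congr (_ * _).
rewrite (reindex (cast_ord hm)) /=; last first.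
  by exists (cast_ord (esym hm)) => x _; rewrite ?cast_ordK ?cast_ordKV.
by apply: eq_bigr => t _; rewrite mxE cast_ordK.
Qed.

Definition Vr (q : 'I_n.+1) : AA :=
  match split (cast_ord (esym hm) q) with
  | inl i => mu_ k n s i
  | inr u => lambda_ k n r (jj u)
  end.

Definition Lt (t : 'I_n.+1) : AA :=
  \sum_(i < r) (mderiv t (F i))%:MP * mu_ k n s i
  + \sum_(j < s) (mderiv t (G j))%:MP * lambda_ k n r j.

Lemma sum_codom (f : 'I_s -> AA) :
  \sum_(j | j \in codom jj) f j = \sum_(u < m) f (jj u).
Proof.
rewrite -big_uniq /=; last by rewrite map_inj_uniq ?enum_uniq // codomE.
by rewrite codomE big_map big_enum.
Qed.

Lemma Lt_decomp t : Lt t = \sum_p (Mx p t)%:MP * Vr p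
  + \sum_(j | j \notin codom jj) (mderiv t (G j))%:MP * lambda_ k n r j.
Proof.
rewrite /Lt (bigID (fun j => j \in codom jj)) /= sum_codom addrA; congr (_ + _).
rewrite (reindex (cast_ord hm)) /=; last first.
  by exists (cast_ord (esym hm)) => x _; rewrite ?cast_ordK ?cast_ordKV.
rewrite big_split_ord /=; congr (_ + _); apply: eq_bigr => i _;
  rewrite /Vr mxE /jacFactor cast_ordK.
- by have -> : split (lshift m i) = inl i by apply: (unsplitK (inl _ i)).
- by have -> : split (rshift r i) = inr i by apply: (unsplitK (inr _ i)).
Qed.

Definition Pr : R := \prod_(j < s | j \notin codom jj) G j.
Definition Qj (j : 'I_s) : R := \prod_(j' < s | (j' \notin codom jj) && (j' != j)) G j'.

Lemma PrE j : j \notin codom jj -> Pr = G j * Qj j.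
Proof. by move=> hj; rewrite /Pr (bigD1 j) //=. Qed.

Lemma key q : inJ F G ((Ajac hm F G jj * Pr)%:MP * Vr q).
Proof.
pose a t : AA := (\adj Mx t q * Pr)%:MP.
pose X j : R := \sum_t \adj Mx t q * mderiv t (G j).
exists a, (fun _ => 0),
  (fun j => if j \in codom jj then 0 else - ((X j * Qj j)%:MP)).
have E1 : \sum_t a t * Lt t = (Ajac hm F G jj * Pr)%:MP * Vr q
   + \sum_(j | j \notin codom jj) (X j * Qj j)%:MP * ((G j)%:MP * lambda_ k n r j).
  under eq_bigr do rewrite Lt_decomp mulrDr.
  rewrite big_split /=; congr (_ + _).
    under eq_bigr do rewrite mulr_sumr.
    rewrite exchange_big /=.
    have coef p : \sum_t a t * ((Mx p t)%:MP * Vr p)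
        = ((\det Mx * Pr) *+ (p == q))%:MP * Vr p.
      under eq_bigr do rewrite mulrA.
      rewrite -mulr_suml; congr (_ * _); rewrite /a.
      under eq_bigr do rewrite -rmorphM.
      rewrite -rmorph_sum /=; congr (_%:MP).
      have /matrixP/(_ p q) := mul_mx_adj Mx; rewrite !mxE => h.
      rewrite -mulrnAl -h mulr_suml; apply: eq_bigr => t _; rewrite mxE; ring.
    under eq_bigr do rewrite coef.
    rewrite (bigD1 q) //= big1 ?addr0; first by rewrite eqxx mulr1n det_Mx.
    by move=> p /negPf ->; rewrite mulr0n mpolyC0 mul0r.
  under eq_bigr do rewrite mulr_sumr.
  rewrite exchange_big /=; apply: eq_bigr => j hj.
  under eq_bigr do rewrite mulrA -rmorphM.
  rewrite -mulr_suml -rmorph_sum mulrA -rmorphM /=; congr (_ * _); congr (_%:MP).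
  rewrite /a (PrE hj) /X !mulr_suml.
  by apply: eq_bigr => t _; ring.
rewrite [X in _ = X + _ + _]E1.
have -> : \sum_(i < r) 0 * (F i)%:MP = 0 :> AA.
  by rewrite big1 // => i _; rewrite mul0r.
rewrite addr0 [X in _ = _ + X](bigID (fun j => j \in codom jj)) /=.
rewrite [\sum_(i in codom jj) _]big1; last by move=> j ->; rewrite mul0r.
rewrite add0r -addrA -big_split /= big1 ?addr0 //.
by move=> j /negPf ->; rewrite mulNr addrN.
Qed.

End Key.

Theorem mainTheorem9 (k : fieldType) (hchar : [pchar k] =i pred0)
  (n r s : nat) (hrs : (1 <= r + s)%N) (hn : (2 <= n)%N)
  (d : 'I_r -> nat) (e : 'I_s -> nat)
  (hd : forall i, (1 <= d i)%N) (he : forall j, (1 <= e j)%N)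
  (F : 'I_r -> {mpoly k[n.+1]}) (G : 'I_s -> {mpoly k[n.+1]})
  (hF : forall i, homogOf (d i) (F i)) (hG : forall j, homogOf (e j) (G j))
  (hST : smooth_transversal F G)
  (m : nat) (hm : (r + m = n.+1)%N) (hs : (m <= s)%N)
  (jj : 'I_m -> 'I_s) (hjj : forall u v : 'I_m, (u < v)%N -> (jj u < jj v)%N) :
  (forall i : 'I_r, inJ F G (((Aprime hm F G jj)%:MP) * mu_ k n s i)) /\
  (forall j : 'I_s, inJ F G (((Aprime hm F G jj)%:MP) * lambda_ k n r j)).
Proof.
have jinj : injective jj.
  move=> u v h; apply: val_inj; case: (ltngtP u v) => // huv.
    by have := hjj _ _ huv; rewrite h ltnn.
  by have := hjj _ _ huv; rewrite h ltnn.
split.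
  move=> i; have := key hm F G jinj (cast_ord hm (lshift m i)).
  rewrite /Vr cast_ordK.
  by have -> : split (lshift m i) = inl i by apply: (unsplitK (inl _ i)).
move=> j; case: (boolP (j \in codom jj)) => hj.
  case/codomP: hj => u ->.
  have := key hm F G jinj (cast_ord hm (rshift r u)).
  rewrite /Vr cast_ordK.
  by have -> : split (rshift r u) = inr u by apply: (unsplitK (inr _ u)).
exists (fun _ => 0), (fun _ => 0),
  (fun j' => if j' == j then (Ajac hm F G jj * Qj G jj j)%:MP else 0).
rewrite big1; last by move=> t _; rewrite mul0r.
rewrite big1; last by move=> t _; rewrite mul0r.
rewrite !add0r (bigD1 j) //= eqxx big1 ?addr0; last first.
  by move=> j' /negPf ->; rewrite mul0r.
rewrite /Aprime -/(Pr G jj) (PrE G hj).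
by rewrite !rmorphM /=; ring.
Qed.
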